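(* Let $\mathcal{G}$ be a noncompact metric graph in the class $\mathbf{G}$ with finitely many edges, at least one of which is bounded, and such that every vertex of $\mathcal{G}$ is attached to an even number of half-lines (possibly zero). Then for every $p>6$ there exists $\overline{\mu}>0$, depending on $p$ and $\mathcal{G}$, such that for all $\mu\ge\overline{\mu}$ problem \[ \begin{cases} u''+u^{p-1}=\lambda u & \text{on every edge of }\mathcal{G},\\ u\in H^1(\mathcal{G}),\ u>0 & \text{on }\mathcal{G},\\ \sum_{e\succ \mathrm{v}}\frac{du}{dx_e}(\mathrm{v})=0 & \text{for every vertex }\mathrm{v}, \end{cases} \] admits a positive solution $u\in H^1_\mu(\mathcal{G})$ (for some $\lambda\in\mathbb R$) with $E(u,\mathcal{G})<0$.
   Context: A metric graph $\mathcal{G}=(\mathbb{V},\mathbb{E})$ belongs to the class $\mathbf{G}$ if it is connected, has at most countably many edges, every vertex has finite degree, and $\inf_{e\in\mathbb{E}}|e|>0$. Noncompact means it has at least one half-line or infinitely many edges. $H^1(\mathcal{G})$ is the space of continuous functions on $\mathcal{G}$, $H^1$ on each edge, with finite $H^1$ norm; $H^1_\mu(\mathcal{G})=\{v\in H^1(\mathcal{G}):\|v\|_{L^2}^2=\mu\}$; $E(u,\mathcal{G})=\frac12\|u'\|_{L^2(\mathcal G)}^2-\frac1p\|u\|_{L^p(\mathcal G)}^p$. The vertex condition is the Kirchhoff condition: the sum over edges $e$ incident at $\mathrm v$ of the outgoing derivatives of $u$ at $\mathrm v$ vanishes. *)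

(* Defs.v *)
From Stdlib Require Import Reals Lra.
From Coquelicot Require Import Coquelicot.
Open Scope R_scope.

(* Vertices are 0 .. nV-1.  Bounded edges are 0 .. nB-1; bounded edge i is *)
(* identified with [0, blen i], its point 0 is the vertex bsrc i and its    *)
(* point blen i is the vertex btgt i (self-loops and multiple edges are     *)
(* allowed).  Half-lines are 0 .. nH-1; half-line j is identified with      *)
(* [0, +oo) and its point 0 is the vertex hv j.                             *)
Record MGraph := {
  nV : nat; nB : nat; nH : nat;
  blen : nat -> R; bsrc : nat -> nat; btgt : nat -> nat;
  hv : nat -> nat }.

Definition wf_graph (G : MGraph) : Prop :=
  (forall i, (i < nB G)%nat ->
     0 < blen G i /\ (bsrc G i < nV G)%nat /\ (btgt G i < nV G)%nat) /\
  (forall j, (j < nH G)%nat -> (hv G j < nV G)%nat).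

Inductive reach (G : MGraph) (v : nat) : nat -> Prop :=
| reach_refl : reach G v v
| reach_step : forall w i, reach G v w -> (i < nB G)%nat ->
    (bsrc G i = w \/ btgt G i = w) ->
    reach G v (if Nat.eqb (bsrc G i) w then btgt G i else bsrc G i).

Definition connected_graph (G : MGraph) : Prop :=
  forall v w, (v < nV G)%nat -> (w < nV G)%nat -> reach G v w.

Fixpoint rsum (n : nat) (f : nat -> R) : R :=
  match n with O => 0 | S k => rsum k f + f k end.

Fixpoint ncount (n : nat) (P : nat -> bool) : nat :=
  match n with O => O | S k => (ncount k P + (if P k then 1 else 0))%nat end.

Definition nhalf (G : MGraph) (v : nat) : nat :=
  ncount (nH G) (fun j => Nat.eqb (hv G j) v).

Definition even_halflines (G : MGraph) : Prop :=
  forall v, (v < nV G)%nat -> Nat.even (nhalf G v) = true.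

(* Functions on the graph: ub i is u on bounded edge i (on [0, blen i]),   *)
(* uh j is u on half-line j (on [0,+oo)).  Values outside are irrelevant.  *)

Definition sq (x : R) : R := x * x.

Definition vertex_continuous (G : MGraph) (ub uh : nat -> R -> R) : Prop :=
  exists phi : nat -> R,
    (forall i, (i < nB G)%nat ->
       ub i 0 = phi (bsrc G i) /\ ub i (blen G i) = phi (btgt G i)) /\
    (forall j, (j < nH G)%nat -> uh j 0 = phi (hv G j)).

Definition positive_on (G : MGraph) (ub uh : nat -> R -> R) : Prop :=
  (forall i x, (i < nB G)%nat -> 0 <= x <= blen G i -> 0 < ub i x) /\
  (forall j x, (j < nH G)%nat -> 0 <= x -> 0 < uh j x).

(* on each edge: C^2 in the interior with the equation u'' + u^(p-1) = lam u,
   continuous up to the endpoints, with one-sided derivatives at the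
   endpoints given as limits of u' (dB0 i at 0, dBl i at blen i, dH j at 0). *)
Definition edge_equation (G : MGraph) (p lam : R) (ub uh : nat -> R -> R)
  (dB0 dBl dH : nat -> R) : Prop :=
  (forall i, (i < nB G)%nat ->
     (forall x, 0 < x < blen G i ->
        ex_derive (ub i) x /\ ex_derive (Derive (ub i)) x /\
        Derive (Derive (ub i)) x + Rpower (ub i x) (p - 1) = lam * ub i x) /\
     filterlim (ub i) (at_right 0) (locally (ub i 0)) /\
     filterlim (ub i) (at_left (blen G i)) (locally (ub i (blen G i))) /\
     filterlim (Derive (ub i)) (at_right 0) (locally (dB0 i)) /\
     filterlim (Derive (ub i)) (at_left (blen G i)) (locally (dBl i))) /\
  (forall j, (j < nH G)%nat ->
     (forall x, 0 < x ->
        ex_derive (uh j) x /\ ex_derive (Derive (uh j)) x /\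
        Derive (Derive (uh j)) x + Rpower (uh j x) (p - 1) = lam * uh j x) /\
     filterlim (uh j) (at_right 0) (locally (uh j 0)) /\
     filterlim (Derive (uh j)) (at_right 0) (locally (dH j))).

(* Outgoing derivative of bounded edge i at its point 0 is dB0 i, at its
   point blen i it is - dBl i; of half-line j at its origin it is dH j. *)
Definition kirchhoff (G : MGraph) (dB0 dBl dH : nat -> R) : Prop :=
  forall v, (v < nV G)%nat ->
    rsum (nB G) (fun i => if Nat.eqb (bsrc G i) v then dB0 i else 0)
  + rsum (nB G) (fun i => if Nat.eqb (btgt G i) v then - dBl i else 0)
  + rsum (nH G) (fun j => if Nat.eqb (hv G j) v then dH j else 0) = 0.

Definition H1_Lp_finite (G : MGraph) (p : R) (ub uh : nat -> R -> R) : Prop :=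
  (forall i, (i < nB G)%nat ->
     ex_RInt (fun x => sq (ub i x)) 0 (blen G i) /\
     ex_RInt (fun x => sq (Derive (ub i) x)) 0 (blen G i) /\
     ex_RInt (fun x => Rpower (ub i x) p) 0 (blen G i)) /\
  (forall j, (j < nH G)%nat ->
     ex_RInt_gen (fun x => sq (uh j x)) (at_point 0) (Rbar_locally p_infty) /\
     ex_RInt_gen (fun x => sq (Derive (uh j) x)) (at_point 0) (Rbar_locally p_infty) /\
     ex_RInt_gen (fun x => Rpower (uh j x) p) (at_point 0) (Rbar_locally p_infty)).

Definition mass (G : MGraph) (ub uh : nat -> R -> R) : R :=
  rsum (nB G) (fun i => RInt (fun x => sq (ub i x)) 0 (blen G i))
+ rsum (nH G) (fun j => RInt_gen (fun x => sq (uh j x)) (at_point 0) (Rbar_locally p_infty)).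

Definition kinetic (G : MGraph) (ub uh : nat -> R -> R) : R :=
  rsum (nB G) (fun i => RInt (fun x => sq (Derive (ub i) x)) 0 (blen G i))
+ rsum (nH G) (fun j => RInt_gen (fun x => sq (Derive (uh j) x)) (at_point 0) (Rbar_locally p_infty)).

Definition Lp_pow (G : MGraph) (p : R) (ub uh : nat -> R -> R) : R :=
  rsum (nB G) (fun i => RInt (fun x => Rpower (ub i x) p) 0 (blen G i))
+ rsum (nH G) (fun j => RInt_gen (fun x => Rpower (uh j x) p) (at_point 0) (Rbar_locally p_infty)).

(* E(u, G) = 1/2 ||u'||_2^2 - 1/p ||u||_p^p  (u > 0, so |u|^p = u^p) *)
Definition energy (G : MGraph) (p : R) (ub uh : nat -> R -> R) : R :=
  / 2 * kinetic G ub uh - / p * Lp_pow G p ub uh.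

Definition positive_solution (G : MGraph) (p lam : R) (ub uh : nat -> R -> R) : Prop :=
  vertex_continuous G ub uh /\ positive_on G ub uh /\ H1_Lp_finite G p ub uh /\
  exists dB0 dBl dH : nat -> R,
    edge_equation G p lam ub uh dB0 dBl dH /\ kirchhoff G dB0 dBl dH.

(* Main.v *)
Require Import Defs.
From Stdlib Require Import Reals Lra Lia ClassicalEpsilon.
From Coquelicot Require Import Coquelicot.
Open Scope R_scope.

Lemma gen_of_lim (f F : R -> R) (a l : R) :
  (forall b, is_RInt f a b (F b)) ->
  filterlim F (Rbar_locally p_infty) (locally l) ->
  is_RInt_gen f (at_point a) (Rbar_locally p_infty) l.
Proof.
  intros Hf HF P HP.
  apply Filter_prod with (Q := fun x => x = a) (R := fun b => P (F b)).
  - reflexivity.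
  - apply HF. exact HP.
  - intros x y -> Hy. exists (F y). split; auto.
Qed.

Lemma exp_int_bound (M d u v : R) : 0 < d -> u <= v ->
  is_RInt (fun t => M * exp (- d * t)) u v (M / d * (exp (- d * u) - exp (- d * v))).
Proof.
  intros Hd Huv.
  replace (M / d * (exp (- d * u) - exp (- d * v))) with
     (minus ((fun t => - M / d * exp (- d * t)) v) ((fun t => - M / d * exp (- d * t)) u)).
  2:{ unfold minus, plus, opp; simpl. field. lra. }
  apply (is_RInt_derive (fun t => - M / d * exp (- d * t))).
  - intros x _. auto_derive; auto. field. lra.
  - intros x _. apply (ex_derive_continuous (fun t => M * exp (- d * t))). auto_derive. auto.
Qed.

Lemma tail_piece (g : R -> R) (M d u v : R) : 0 < d ->
  (forall y, continuous g y) -> (forall y, Rabs (g y) <= M * exp (- d * y)) ->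
  u <= v -> Rabs (RInt g u v) <= M / d * exp (- d * u).
Proof.
  intros Hd Hc Hb Huv.
  assert (HM : 0 <= M).
  { specialize (Hb 0). pose proof (Rabs_pos (g 0)). pose proof (exp_pos (- d * 0)). nra. }
  assert (Eg : ex_RInt g u v) by (apply (ex_RInt_continuous (V := R_CompleteNormedModule)); auto).
  eapply Rle_trans. apply abs_RInt_le; auto.
  assert (Eb : ex_RInt (fun t => M * exp (- d * t)) u v).
  { eexists. apply exp_int_bound; eauto. }
  assert (Ea : ex_RInt (fun t => Rabs (g t)) u v).
  { apply (ex_RInt_continuous (V := R_CompleteNormedModule)). intros. apply (continuous_comp g Rabs); auto. apply continuous_Rabs. }
  eapply Rle_trans. apply (RInt_le _ (fun t => M * exp (- d * t))); auto.
  rewrite (is_RInt_unique _ _ _ _ (exp_int_bound M d u v Hd Huv)).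
  pose proof (exp_pos (- d * v)).
  assert (0 <= M / d) by (apply Rmult_le_pos; auto; left; apply Rinv_0_lt_compat; auto).
  nra.
Qed.

Lemma tail_lim (g : R -> R) (M d : R) : 0 < d ->
  (forall y, continuous g y) -> (forall y, Rabs (g y) <= M * exp (- d * y)) ->
  forall a, exists l, filterlim (fun b => RInt g a b) (Rbar_locally p_infty) (locally l).
Proof.
  intros Hd Hc Hb a.
  assert (HM : 0 <= M).
  { specialize (Hb 0). pose proof (Rabs_pos (g 0)). pose proof (exp_pos (- d * 0)). nra. }
  apply (filterlim_locally_cauchy (U := R_CompleteSpace)).
  intros eps.
  set (N := Rmax 0 (/ d * ln ((M / d + 1) / eps))).
  assert (HN : M / d * exp (- d * N) < eps).
  { assert (Hq : 0 < (M / d + 1) / eps).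
    { apply Rdiv_lt_0_compat. assert (0 <= M / d) by (apply Rmult_le_pos; auto; left; apply Rinv_0_lt_compat; auto). lra. apply cond_pos. }
    assert (H1 : exp (d * N) >= (M / d + 1) / eps).
    { rewrite <- (exp_ln _ Hq). apply Rle_ge. apply exp_le_3 || idtac.
      destruct (Rle_dec (ln ((M / d + 1) / eps)) (d * N)) as [h|h].
      - destruct h as [h|h]; [left; apply exp_increasing; auto | rewrite h; right; auto].
      - exfalso. apply h. apply Rle_trans with (d * (/ d * ln ((M / d + 1) / eps))).
        right; field; lra.
        apply Rmult_le_compat_l; [lra | apply Rmax_r]. }
    assert (Hm : 0 <= M / d) by (apply Rmult_le_pos; auto; left; apply Rinv_0_lt_compat; auto).
    rewrite Ropp_mult_distr_l_reverse, exp_Ropp.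
    pose proof (exp_pos (d * N)). pose proof (cond_pos eps).
    apply Rmult_lt_reg_r with (exp (d * N)); auto.
    rewrite Rmult_assoc, Rinv_l by lra. unfold Rdiv in H1.
    apply Rge_le in H1.
    apply Rmult_le_compat_l with (r := eps) in H1; [|lra].
    replace (eps * ((M * / d + 1) * / eps)) with (M / d + 1) in H1 by (field; lra). lra. }
  exists (fun u => N < u). split.
  - exists N. auto.
  - intros u v Hu Hv.
    assert (Hex : forall x y, ex_RInt g x y) by (intros; apply (ex_RInt_continuous (V := R_CompleteNormedModule)); auto).
    pose proof (RInt_Chasles (V:=R_CompleteNormedModule) g a u v (Hex a u) (Hex u v)) as E.
    unfold plus in E; simpl in E.
    change (Rabs (RInt g a v - RInt g a u) < eps).
    replace (RInt g a v - RInt g a u) with (RInt g u v) by (simpl in *; lra).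
    assert (Hexp : forall w, N < w -> M / d * exp (- d * w) <= M / d * exp (- d * N)).
    { intros w Hw. apply Rmult_le_compat_l. apply Rmult_le_pos; auto; left; apply Rinv_0_lt_compat; auto.
      left. apply exp_increasing. nra. }
    destruct (Rle_dec u v) as [h|h].
    + eapply Rle_lt_trans. apply (tail_piece g M d u v); auto. eapply Rle_lt_trans; [apply Hexp; auto| auto].
    + rewrite <- (opp_RInt_swap g), Rabs_Ropp by auto.
      eapply Rle_lt_trans. apply (tail_piece g M d v u); auto; lra. eapply Rle_lt_trans; [apply Hexp; auto| auto].
Qed.

Lemma lin_to_infty (B s : R) : 0 < B ->
  filterlim (fun b => B * b + s) (Rbar_locally p_infty) (Rbar_locally p_infty).
Proof.
  intros HB P [M HM]. exists ((M - s) / B). intros x Hx. apply HM.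
  apply Rmult_lt_compat_l with (r := B) in Hx; auto.
  replace (B * ((M - s) / B)) with (M - s) in Hx by (field; lra). lra.
Qed.

Lemma scaled_gen (g f : R -> R) (K B s l : R) : 0 < B ->
  (forall y, continuous g y) ->
  filterlim (fun b => RInt g s b) (Rbar_locally p_infty) (locally l) ->
  (forall x, f x = K * g (B * x + s)) ->
  is_RInt_gen f (at_point 0) (Rbar_locally p_infty) (K / B * l).
Proof.
  intros HB Hc Hl Hf.
  apply gen_of_lim with (F := fun b => K / B * RInt g s (B * b + s)).
  - intros b.
    assert (H : is_RInt g (B * 0 + s) (B * b + s) (RInt g s (B * b + s))).
    { replace (B * 0 + s) with s by ring. apply (RInt_correct (V := R_CompleteNormedModule)).
      apply (ex_RInt_continuous (V := R_CompleteNormedModule)); auto. }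
    apply is_RInt_comp_lin in H.
    apply (is_RInt_scal _ _ _ (K / B)) in H.
    eapply is_RInt_ext; [|exact H].
    intros x _. rewrite Hf. unfold scal; simpl; unfold mult; simpl. field. lra.
  - apply (filterlim_comp _ _ _ (fun b => RInt g s (B * b + s)) (fun z => scal (K / B) z) _ (locally l)).
    + apply (filterlim_comp _ _ _ (fun b => B * b + s) (fun c => RInt g s c) _ (Rbar_locally p_infty)); auto.
      apply lin_to_infty; auto.
    + apply (filterlim_scal_r (K := R_AbsRing) (V := R_NormedModule)).
Qed.

Definition Eh y := (exp y + exp (- y)) / 2.
Definition Sh y := (exp y - exp (- y)) / 2.

Lemma Eh_pos y : 0 < Eh y.
Proof. unfold Eh. pose proof (exp_pos y). pose proof (exp_pos (-y)). lra. Qed.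

Lemma EhSh y : Eh y * Eh y - Sh y * Sh y = 1.
Proof. unfold Eh, Sh. rewrite exp_Ropp. pose proof (exp_pos y). field. lra. Qed.

Definition prof (ga a B s x : R) := exp (ga * (a - ln (Eh (B * x + s)))).
Definition pd1 (ga a B s x : R) := prof ga a B s x * (- ga * B * Sh (B * x + s) / Eh (B * x + s)).
Definition pd2 (ga a B s x : R) :=
  prof ga a B s x * (B * B * (ga * ga - ga * (ga + 1) / (Eh (B * x + s) * Eh (B * x + s)))).

Lemma prof_d1 ga a B s x : is_derive (prof ga a B s) x (pd1 ga a B s x).
Proof.
  unfold prof, pd1. pose proof (Eh_pos (B * x + s)) as HE. unfold Eh in *. unfold Sh.
  auto_derive. lra. unfold prof, Eh. match goal with |- ?A = ?B => change (@eq R A B) end. unfold Rminus, Rdiv. field. lra.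
Qed.

Lemma d1_d2 ga a B s x : is_derive (pd1 ga a B s) x (pd2 ga a B s x).
Proof.
  unfold pd1, pd2, prof. pose proof (Eh_pos (B * x + s)) as HE. unfold Eh, Sh in *.
  auto_derive. lra.
  unfold prof, Eh. match goal with |- ?A = ?B => change (@eq R A B) end.
  rewrite !exp_Ropp in *. unfold Rminus, Rdiv.
  set (w := exp (B * x + s)) in *. set (P := exp _). assert (0 < w) by apply exp_pos.
  field. split; nra.
Qed.

Definition gam p := 2 / (p - 2).
Definition kk p := sqrt (p / 2).
Definition s0 p := ln (kk p + sqrt (kk p * kk p - 1)).
Definition q1 p y := exp (2 * gam p * (ln (kk p) - ln (Eh y))).
Definition q2 p y := q1 p y * ((Sh y / Eh y) * (Sh y / Eh y)).
Definition q3 p y := exp (p * gam p * (ln (kk p) - ln (Eh y))).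

Lemma kk_gt1 p : 2 < p -> 1 < kk p.
Proof.
  intros Hp. unfold kk. rewrite <- sqrt_1. apply sqrt_lt_1; lra.
Qed.

Lemma kk_sq p : 2 < p -> kk p * kk p = p / 2.
Proof. intros; unfold kk; apply sqrt_sqrt; lra. Qed.

Lemma Eh_s0 p : 2 < p -> Eh (s0 p) = kk p.
Proof.
  intros Hp. pose proof (kk_gt1 p Hp) as Hk.
  set (k := kk p) in *.
  set (q := sqrt (k * k - 1)).
  assert (Hq : q * q = k * k - 1) by (apply sqrt_sqrt; nra).
  assert (Hq0 : 0 <= q) by apply sqrt_pos.
  unfold Eh, s0. fold k. fold q.
  rewrite exp_Ropp, exp_ln by lra.
  assert (Hi : / (k + q) = k - q).
  { apply Rmult_eq_reg_l with (k + q); [|lra]. rewrite Rinv_r by lra. nra. }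
  rewrite Hi. field.
Qed.

Lemma Eh_even y : Eh (- y) = Eh y.
Proof. unfold Eh. rewrite Ropp_involutive. lra. Qed.
Lemma Sh_odd y : Sh (- y) = - Sh y.
Proof. unfold Sh. rewrite Ropp_involutive. lra. Qed.

Lemma Eh_lower y : exp y / 2 <= Eh y.
Proof. unfold Eh. pose proof (exp_pos (- y)). lra. Qed.

Lemma Sh_le_Eh y : (Sh y / Eh y) * (Sh y / Eh y) <= 1.
Proof.
  pose proof (EhSh y). pose proof (Eh_pos y).
  replace ((Sh y / Eh y) * (Sh y / Eh y)) with ((Sh y * Sh y) / (Eh y * Eh y)) by (field; lra).
  apply Rmult_le_reg_r with (Eh y * Eh y); [nra|].
  field_simplify; nra.
Qed.

Lemma qbound (c l y : R) : 0 < c ->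
  exp (c * (l - ln (Eh y))) <= exp (c * (l + ln 2)) * exp (- c * y).
Proof.
  intros Hc. rewrite <- exp_plus.
  assert (H : y - ln 2 <= ln (Eh y)).
  { replace (y - ln 2) with (ln (exp y / 2)).
    - apply ln_le. pose proof (exp_pos y). lra. apply Eh_lower.
    - unfold Rdiv. rewrite ln_mult, ln_Rinv, ln_exp; try lra; try apply exp_pos; try (apply Rinv_0_lt_compat; lra). }
  destruct (Req_dec (c * (l - ln (Eh y))) (c * (l + ln 2) + - c * y)) as [e|e].
  - rewrite e; lra.
  - left. apply exp_increasing. nra.
Qed.

Lemma Eh_cont y : continuous Eh y.
Proof. apply (ex_derive_continuous (K:=R_AbsRing) (V:=R_NormedModule)). unfold Eh. auto_derive. auto. Qed.

Lemma qexp_cont c l y : continuous (fun y => exp (c * (l - ln (Eh y)))) y.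
Proof.
  apply (ex_derive_continuous (K:=R_AbsRing) (V:=R_NormedModule)). pose proof (Eh_pos y). unfold Eh in *. auto_derive. lra.
Qed.

Lemma q1_cont p y : continuous (q1 p) y.
Proof. apply qexp_cont. Qed.
Lemma q3_cont p y : continuous (q3 p) y.
Proof. apply qexp_cont. Qed.
Lemma q2_cont p y : continuous (q2 p) y.
Proof.
  apply (ex_derive_continuous (K:=R_AbsRing) (V:=R_NormedModule)). pose proof (Eh_pos y). unfold q2, q1, Sh, Eh in *. auto_derive. repeat split; lra.
Qed.

Lemma gam_pos p : 2 < p -> 0 < gam p.
Proof. intros; unfold gam; apply Rdiv_lt_0_compat; lra. Qed.

Lemma q_lims p : 2 < p ->
  (forall a, exists l, filterlim (fun b => RInt (q1 p) a b) (Rbar_locally p_infty) (locally l)) /\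
  (forall a, exists l, filterlim (fun b => RInt (q2 p) a b) (Rbar_locally p_infty) (locally l)) /\
  (forall a, exists l, filterlim (fun b => RInt (q3 p) a b) (Rbar_locally p_infty) (locally l)).
Proof.
  intros Hp. pose proof (gam_pos p Hp) as Hg.
  assert (H1 : forall y, Rabs (q1 p y) <= exp (2 * gam p * (ln (kk p) + ln 2)) * exp (- (2 * gam p) * y)).
  { intros y. rewrite Rabs_pos_eq by (left; apply exp_pos). apply qbound. lra. }
  split; [|split].
  - apply (tail_lim _ (exp (2 * gam p * (ln (kk p) + ln 2))) (2 * gam p)); [lra| apply q1_cont | exact H1].
  - apply (tail_lim _ (exp (2 * gam p * (ln (kk p) + ln 2))) (2 * gam p)); [lra| apply q2_cont |].
    intros y. specialize (H1 y). unfold q2. rewrite Rabs_mult, (Rabs_pos_eq ((Sh y / Eh y) * (Sh y / Eh y))) by nra.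
    pose proof (Sh_le_Eh y). pose proof (Rabs_pos (q1 p y)).
    assert (0 <= (Sh y / Eh y) * (Sh y / Eh y)) by nra. nra.
  - apply (tail_lim _ (exp (p * gam p * (ln (kk p) + ln 2))) (p * gam p)); [nra| apply q3_cont |].
    intros y. rewrite Rabs_pos_eq by (left; apply exp_pos). apply qbound. nra.
Qed.

Lemma rsum_ext n f g : (forall i, (i < n)%nat -> f i = g i) -> rsum n f = rsum n g.
Proof.
  induction n; simpl; intros H; auto.
  rewrite IHn by (intros; apply H; lia). rewrite H by lia. auto.
Qed.
Lemma rsum_scal n a f : rsum n (fun i => a * f i) = a * rsum n f.
Proof. induction n; simpl; [ring|rewrite IHn; ring]. Qed.
Lemma rsum_zero n f : (forall i, f i = 0) -> rsum n f = 0.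
Proof. induction n; simpl; intros H; auto. rewrite IHn, H; auto; ring. Qed.
Lemma rsum_pos n f : (forall i, (i < n)%nat -> 0 < f i) -> (1 <= n)%nat -> 0 < rsum n f.
Proof.
  induction n; simpl; intros H Hn. lia.
  destruct n. simpl. specialize (H 0%nat). lia || (rewrite Rplus_0_l; apply H; lia).
  assert (0 < rsum (S n) f) by (apply IHn; [intros; apply H; lia| lia]).
  specialize (H (S n)). assert (0 < f (S n)) by (apply H; lia). lra.
Qed.

Definition sig (G : MGraph) j : R :=
  if Nat.even (ncount j (fun i => Nat.eqb (hv G i) (hv G j))) then 1 else -1.

Lemma sig_pm G j : sig G j = 1 \/ sig G j = -1.
Proof. unfold sig. destruct Nat.even; auto. Qed.

Lemma sig_sum G v n :
  rsum n (fun j => if Nat.eqb (hv G j) v then sig G j else 0) =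
  if Nat.even (ncount n (fun i => Nat.eqb (hv G i) v)) then 0 else 1.
Proof.
  induction n; simpl; auto.
  destruct (Nat.eqb (hv G n) v) eqn:E.
  - apply Nat.eqb_eq in E.
    assert (Hs : sig G n = if Nat.even (ncount n (fun i => Nat.eqb (hv G i) v)) then 1 else -1)
      by (unfold sig; rewrite E; auto).
    rewrite Hs, IHn.
    rewrite Nat.even_add. simpl. destruct (Nat.even (ncount n (fun i => Nat.eqb (hv G i) v))); simpl; ring.
  - rewrite IHn, Nat.add_0_r. ring.
Qed.

Definition Bv p r := exp r / gam p.
Definition cv p r := exp (gam p * r).
Definition ubf p r : nat -> R -> R := fun _ _ => cv p r.
Definition uhf G p r : nat -> R -> R :=
  fun j => prof (gam p) (r + ln (kk p)) (Bv p r) (sig G j * s0 p).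

Lemma Eh_sig p sg : 2 < p -> (sg = 1 \/ sg = -1) -> Eh (sg * s0 p) = kk p.
Proof.
  intros Hp [-> | ->]. rewrite Rmult_1_l. apply Eh_s0; auto.
  replace (-1 * s0 p) with (- s0 p) by ring. rewrite Eh_even. apply Eh_s0; auto.
Qed.

Lemma uh0 G p r j : 2 < p -> uhf G p r j 0 = cv p r.
Proof.
  intros Hp. unfold uhf, prof, cv. replace (Bv p r * 0 + sig G j * s0 p) with (sig G j * s0 p) by ring.
  rewrite Eh_sig; auto using sig_pm. f_equal. ring.
Qed.

Lemma d10 G p r j : 2 < p ->
  pd1 (gam p) (r + ln (kk p)) (Bv p r) (sig G j * s0 p) 0 =
  sig G j * (cv p r * (- gam p * Bv p r * Sh (s0 p) / kk p)).
Proof.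
  intros Hp. unfold pd1.
  replace (Bv p r * 0 + sig G j * s0 p) with (sig G j * s0 p) by ring.
  pose proof (uh0 G p r j Hp) as H. unfold uhf in H.
  replace (Bv p r * 0 + sig G j * s0 p) with (sig G j * s0 p) in H by ring.
  rewrite H, Eh_sig; auto using sig_pm.
  pose proof (kk_gt1 p Hp).
  destruct (sig_pm G j) as [e|e]; rewrite e.
  - rewrite Rmult_1_l. field. lra.
  - replace (-1 * s0 p) with (- s0 p) by ring. rewrite Sh_odd. field. lra.
Qed.

Lemma prof_eq p r s x : 2 < p ->
  pd2 (gam p) (r + ln (kk p)) (Bv p r) s x +
  Rpower (prof (gam p) (r + ln (kk p)) (Bv p r) s x) (p - 1) =
  exp r * exp r * prof (gam p) (r + ln (kk p)) (Bv p r) s x.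
Proof.
  intros Hp. unfold pd2, Rpower. 
  set (P := prof (gam p) (r + ln (kk p)) (Bv p r) s x).
  unfold P at 2. unfold prof. rewrite ln_exp.
  set (E := Eh (Bv p r * x + s)).
  assert (HE : 0 < E) by apply Eh_pos.
  pose proof (kk_gt1 p Hp) as Hk. pose proof (kk_sq p Hp) as Hk2.
  replace ((p - 1) * (gam p * (r + ln (kk p) - ln E))) with
    (gam p * (r + ln (kk p) - ln E) + (r + r + ln (kk p) + ln (kk p) + - ln E + - ln E)).
  2:{ unfold gam. field. lra. }
  rewrite exp_plus.
  replace (exp (gam p * (r + ln (kk p) - ln E))) with P by (unfold P, prof; reflexivity).
  rewrite !exp_plus, !exp_Ropp, !exp_ln by lra.
  unfold Bv. set (X := exp r). assert (0 < X) by apply exp_pos.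
  replace (/ E * / E) with (/ (E * E)) by (field; lra).
  rewrite !Rmult_assoc. rewrite <- (Rmult_assoc (kk p) (kk p)). rewrite Hk2.
  unfold gam. field. repeat split; lra.
Qed.

Lemma sq_prof p r s x :
  sq (prof (gam p) (r + ln (kk p)) (Bv p r) s x) = exp (2 * gam p * r) * q1 p (Bv p r * x + s).
Proof. unfold sq, prof, q1. rewrite <- !exp_plus. f_equal. ring. Qed.

Lemma Derive_uh G p r j x :
  Derive (uhf G p r j) x = pd1 (gam p) (r + ln (kk p)) (Bv p r) (sig G j * s0 p) x.
Proof. apply is_derive_unique. apply prof_d1. Qed.

Lemma hl_int1 G p r j l : 2 < p ->
  filterlim (fun b => RInt (q1 p) (sig G j * s0 p) b) (Rbar_locally p_infty) (locally l) ->
  is_RInt_gen (fun x => sq (uhf G p r j x)) (at_point 0) (Rbar_locally p_infty)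
    (exp (2 * gam p * r) / Bv p r * l).
Proof.
  intros Hp Hl. apply (scaled_gen (q1 p) _ _ (Bv p r) (sig G j * s0 p)); auto.
  - unfold Bv. apply Rdiv_lt_0_compat. apply exp_pos. apply gam_pos; auto.
  - apply q1_cont.
  - intros x. apply sq_prof.
Qed.

Lemma hl_int2 G p r j l : 2 < p ->
  filterlim (fun b => RInt (q2 p) (sig G j * s0 p) b) (Rbar_locally p_infty) (locally l) ->
  is_RInt_gen (fun x => sq (Derive (uhf G p r j) x)) (at_point 0) (Rbar_locally p_infty)
    (exp (2 * gam p * r) * (exp r * exp r) / Bv p r * l).
Proof.
  intros Hp Hl. pose proof (gam_pos p Hp) as Hg. apply (scaled_gen (q2 p) _ _ (Bv p r) (sig G j * s0 p)); auto.
  - unfold Bv. apply Rdiv_lt_0_compat. apply exp_pos. auto.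
  - apply q2_cont.
  - intros x. rewrite Derive_uh. unfold pd1.
    set (P := prof _ _ _ _ x).
    replace (sq (P * (- gam p * Bv p r * Sh (Bv p r * x + sig G j * s0 p) / Eh (Bv p r * x + sig G j * s0 p))))
      with (sq P * (gam p * gam p * Bv p r * Bv p r) * ((Sh (Bv p r * x + sig G j * s0 p) / Eh (Bv p r * x + sig G j * s0 p)) * (Sh (Bv p r * x + sig G j * s0 p) / Eh (Bv p r * x + sig G j * s0 p)))).
    2:{ unfold sq. pose proof (Eh_pos (Bv p r * x + sig G j * s0 p)). field. lra. }
    unfold P. rewrite sq_prof. unfold q2, Bv. pose proof (Eh_pos (exp r / gam p * x + sig G j * s0 p)). field. lra.
Qed.

Lemma hl_int3 G p r j l : 2 < p ->
  filterlim (fun b => RInt (q3 p) (sig G j * s0 p) b) (Rbar_locally p_infty) (locally l) ->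
  is_RInt_gen (fun x => Rpower (uhf G p r j x) p) (at_point 0) (Rbar_locally p_infty)
    (exp (p * gam p * r) / Bv p r * l).
Proof.
  intros Hp Hl. apply (scaled_gen (q3 p) _ _ (Bv p r) (sig G j * s0 p)); auto.
  - unfold Bv. apply Rdiv_lt_0_compat. apply exp_pos. apply gam_pos; auto.
  - apply q3_cont.
  - intros x. unfold uhf, prof, Rpower, q3. rewrite ln_exp, <- exp_plus. f_equal. ring.
Qed.

Lemma cont_at_right (f : R -> R) (x : R) : continuous f x -> filterlim f (at_right x) (locally (f x)).
Proof. intros H. eapply filterlim_filter_le_1; [apply filter_le_within | exact H]. Qed.
Lemma cont_at_left (f : R -> R) (x : R) : continuous f x -> filterlim f (at_left x) (locally (f x)).
Proof. intros H. eapply filterlim_filter_le_1; [apply filter_le_within | exact H]. Qed.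

Lemma possol G p r : wf_graph G -> even_halflines G -> 2 < p ->
  positive_solution G p (exp r * exp r) (ubf p r) (uhf G p r).
Proof.
  intros Hw Hev Hp. pose proof (gam_pos p Hp) as Hg.
  unfold positive_solution. split; [|split; [|split]].
  - exists (fun _ => cv p r). split.
    + intros i _. unfold ubf; auto.
    + intros j _. apply uh0; auto.
  - split; intros; unfold ubf, cv, uhf, prof; apply exp_pos.
  - split.
    + intros i _. unfold ubf. split; [|split].
      * apply (ex_RInt_const (V := R_NormedModule)).
      * apply (ex_RInt_ext (fun _ => 0)). intros; rewrite Derive_const; unfold sq; rewrite Rmult_0_l; reflexivity.
        apply (ex_RInt_const (V := R_NormedModule)).
      * apply (ex_RInt_const (V := R_NormedModule)).
    + intros j _. destruct (q_lims p Hp) as [A1 [A2 A3]].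
      destruct (A1 (sig G j * s0 p)) as [l1 H1].
      destruct (A2 (sig G j * s0 p)) as [l2 H2].
      destruct (A3 (sig G j * s0 p)) as [l3 H3].
      split; [|split]; eexists.
      * apply (hl_int1 G p r j l1); auto.
      * apply (hl_int2 G p r j l2); auto.
      * apply (hl_int3 G p r j l3); auto.
  - exists (fun _ => 0), (fun _ => 0),
      (fun j => pd1 (gam p) (r + ln (kk p)) (Bv p r) (sig G j * s0 p) 0).
    split.
    + split.
      * intros i _. unfold ubf. split; [|split; [|split; [|split]]].
        -- intros x _. split; [|split].
           ++ apply ex_derive_const.
           ++ apply (ex_derive_ext (fun _ => 0)); [intros; rewrite Derive_const; auto | apply ex_derive_const].
           ++ rewrite (Derive_ext (Derive (fun _ => cv p r)) (fun _ => 0)) by (intros; apply Derive_const).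
              rewrite Derive_const. unfold Rpower, cv. rewrite ln_exp, <- !exp_plus.
              rewrite Rplus_0_l. f_equal. unfold gam. field. lra.
        -- apply filterlim_const.
        -- apply filterlim_const.
        -- apply (filterlim_ext (fun _ => 0)); [intros; rewrite Derive_const; auto | apply filterlim_const].
        -- apply (filterlim_ext (fun _ => 0)); [intros; rewrite Derive_const; auto | apply filterlim_const].
      * intros j _. split; [|split].
        -- intros x _. split; [|split].
           ++ eexists; apply prof_d1.
           ++ apply (ex_derive_ext (pd1 (gam p) (r + ln (kk p)) (Bv p r) (sig G j * s0 p))).
              intros; rewrite Derive_uh; auto. eexists; apply d1_d2.
           ++ rewrite (Derive_ext (Derive (uhf G p r j)) (pd1 (gam p) (r + ln (kk p)) (Bv p r) (sig G j * s0 p)))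
                by (intros; apply Derive_uh).
              rewrite (is_derive_unique _ _ _ (d1_d2 _ _ _ _ x)). unfold uhf. apply prof_eq; auto.
        -- apply cont_at_right. apply (ex_derive_continuous (K:=R_AbsRing) (V:=R_NormedModule)).
           eexists; apply prof_d1.
        -- apply (filterlim_ext (pd1 (gam p) (r + ln (kk p)) (Bv p r) (sig G j * s0 p))).
           intros; rewrite Derive_uh; auto.
           apply cont_at_right. apply (ex_derive_continuous (K:=R_AbsRing) (V:=R_NormedModule)).
           eexists; apply d1_d2.
    + intros v Hv.
      rewrite (rsum_zero _ (fun i => if Nat.eqb (bsrc G i) v then 0 else 0)) by (intros; destruct Nat.eqb; auto).
      rewrite (rsum_zero _ (fun i => if Nat.eqb (btgt G i) v then - 0 else 0)) by (intros; destruct Nat.eqb; lra).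
      rewrite (rsum_ext _ _ (fun j => (cv p r * (- gam p * Bv p r * Sh (s0 p) / kk p)) *
                 (if Nat.eqb (hv G j) v then sig G j else 0))).
      2:{ intros j _. rewrite d10 by auto. destruct Nat.eqb; ring. }
      rewrite rsum_scal, sig_sum. unfold even_halflines, nhalf in Hev. rewrite (Hev v Hv). ring.
Qed.

Definition Lt G := rsum (nB G) (blen G).

Lemma RInt_gen_hl (f : R -> R) (v : R) :
  is_RInt_gen f (at_point 0) (Rbar_locally p_infty) v ->
  RInt_gen f (at_point 0) (Rbar_locally p_infty) = v.
Proof. intros H. apply (is_RInt_gen_unique (V := R_CompleteNormedModule)). exact H. Qed.

Lemma RInt_cst (c b : R) : RInt (fun _ => c) 0 b = b * c.
Proof. rewrite (RInt_const (V := R_CompleteNormedModule)). unfold scal; simpl; unfold mult; simpl. ring. Qed.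

Lemma mass_val (G : MGraph) (p r : R) (l1 : R -> R) (Hp : 2 < p) (H1 : forall a, filterlim (fun b => RInt (q1 p) a b) (Rbar_locally p_infty) (locally (l1 a))) : mass G (ubf p r) (uhf G p r) =
  exp (2 * gam p * r) * Lt G + exp (2 * gam p * r) / Bv p r * rsum (nH G) (fun j => l1 (sig G j * s0 p)).
Proof.
  unfold mass, Lt. rewrite <- !rsum_scal. f_equal.
  - apply rsum_ext. intros i _. unfold ubf. rewrite RInt_cst. unfold sq, cv. rewrite <- exp_plus.
    replace (gam p * r + gam p * r) with (2 * gam p * r) by ring. ring.
  - apply rsum_ext. intros j _. apply RInt_gen_hl. apply hl_int1; auto.
Qed.

Lemma kin_val (G : MGraph) (p r : R) (l2 : R -> R) (Hp : 2 < p) (H2 : forall a, filterlim (fun b => RInt (q2 p) a b) (Rbar_locally p_infty) (locally (l2 a))) : kinetic G (ubf p r) (uhf G p r) =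
  exp (2 * gam p * r) * (exp r * exp r) / Bv p r * rsum (nH G) (fun j => l2 (sig G j * s0 p)).
Proof.
  unfold kinetic. rewrite <- !rsum_scal.
  rewrite (rsum_zero (nB G)). rewrite Rplus_0_l.
  - apply rsum_ext. intros j _. apply RInt_gen_hl. apply hl_int2; auto.
  - intros i. unfold ubf. rewrite (RInt_ext _ (fun _ => 0)).
    rewrite RInt_cst. ring. intros; rewrite Derive_const; unfold sq; rewrite Rmult_0_l; reflexivity.
Qed.

Lemma lp_val (G : MGraph) (p r : R) (l3 : R -> R) (Hp : 2 < p) (H3 : forall a, filterlim (fun b => RInt (q3 p) a b) (Rbar_locally p_infty) (locally (l3 a))) : Lp_pow G p (ubf p r) (uhf G p r) =
  exp (p * gam p * r) * Lt G + exp (p * gam p * r) / Bv p r * rsum (nH G) (fun j => l3 (sig G j * s0 p)).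
Proof.
  unfold Lp_pow, Lt. rewrite <- !rsum_scal. f_equal.
  - apply rsum_ext. intros i _. unfold ubf. rewrite RInt_cst. unfold Rpower, cv. rewrite ln_exp.
    replace (p * (gam p * r)) with (p * gam p * r) by ring. ring.
  - apply rsum_ext. intros j _. apply RInt_gen_hl. apply hl_int3; auto.
Qed.

Theorem theorem1p4 (G : MGraph) :
  wf_graph G -> connected_graph G ->
  (1 <= nB G)%nat ->            (* at least one bounded edge *)
  (1 <= nH G)%nat ->            (* noncompact: at least one half-line *)
  even_halflines G ->
  forall p : R, 6 < p ->
  exists mubar : R, 0 < mubar /\
    forall mu : R, mubar <= mu ->
      exists (lam : R) (ub uh : nat -> R -> R),
        positive_solution G p lam ub uh /\
        mass G ub uh = mu /\
        energy G p ub uh < 0.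
Proof.
  intros Hw Hc HnB HnH Hev p Hp6.
  assert (Hp : 2 < p) by lra.
  destruct (q_lims p Hp) as [A1 [A2 A3]].
  set (l1 := fun a => proj1_sig (constructive_indefinite_description _ (A1 a))).
  set (l2 := fun a => proj1_sig (constructive_indefinite_description _ (A2 a))).
  set (l3 := fun a => proj1_sig (constructive_indefinite_description _ (A3 a))).
  assert (H1 : forall a, filterlim (fun b => RInt (q1 p) a b) (Rbar_locally p_infty) (locally (l1 a)))
    by (intros a; exact (proj2_sig (constructive_indefinite_description _ (A1 a)))).
  assert (H2 : forall a, filterlim (fun b => RInt (q2 p) a b) (Rbar_locally p_infty) (locally (l2 a)))
    by (intros a; exact (proj2_sig (constructive_indefinite_description _ (A2 a)))).
  assert (H3 : forall a, filterlim (fun b => RInt (q3 p) a b) (Rbar_locally p_infty) (locally (l3 a)))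
    by (intros a; exact (proj2_sig (constructive_indefinite_description _ (A3 a)))).
  set (S1 := rsum (nH G) (fun j => l1 (sig G j * s0 p))).
  set (S2 := rsum (nH G) (fun j => l2 (sig G j * s0 p))).
  set (S3 := rsum (nH G) (fun j => l3 (sig G j * s0 p))).
  pose proof (gam_pos p Hp) as Hg.
  set (g := gam p) in *.
  assert (HL : 0 < Lt G).
  { unfold Lt. apply rsum_pos; auto. intros i Hi. apply (proj1 (proj1 Hw i Hi)). }
  set (L := Lt G) in *.
  set (F := fun r => exp (2 * g * r) * L + exp (2 * g * r) / Bv p r * S1).
  set (Q := p * (g * S2 / 2 - g * S3 / p) / L).
  set (R0 := ln (Rabs Q + 2 * Rabs (g * S1) / L + 1)).
  assert (HR0 : exp R0 = Rabs Q + 2 * Rabs (g * S1) / L + 1).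
  { unfold R0. apply exp_ln. pose proof (Rabs_pos Q). pose proof (Rabs_pos (g * S1)).
    assert (0 <= 2 * Rabs (g * S1) / L) by (apply Rmult_le_pos; [lra| left; apply Rinv_0_lt_compat; auto]). lra. }
  assert (Hbig : forall r, R0 <= r -> Rabs Q + 2 * Rabs (g * S1) / L + 1 <= exp r).
  { intros r Hr. rewrite <- HR0. destruct Hr as [Hr|Hr]; [left; apply exp_increasing; auto| rewrite Hr; lra]. }
  assert (HF : forall r, F r = exp (2 * g * r) * (L + g * S1 / exp r)).
  { intros r. unfold F, Bv. fold g. pose proof (exp_pos r). field. split; lra. }
  assert (Fbound : forall r, R0 <= r -> L / 2 * exp (2 * g * r) <= F r).
  { intros r Hr. rewrite HF. specialize (Hbig r Hr). pose proof (exp_pos r) as Hx.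
    pose proof (exp_pos (2 * g * r)) as He.
    assert (L / 2 <= L + g * S1 / exp r).
    { assert (Habs : - Rabs (g * S1) <= g * S1) by (pose proof (Rabs_maj2 (g * S1)); lra).
      assert (Hq : 2 * Rabs (g * S1) / L <= exp r) by (pose proof (Rabs_pos Q); lra).
      assert (Hq2 : 2 * Rabs (g * S1) <= L * exp r).
      { apply Rmult_le_compat_l with (r := L) in Hq; [|lra].
        replace (L * (2 * Rabs (g * S1) / L)) with (2 * Rabs (g * S1)) in Hq by (field; lra). lra. }
      assert (g * S1 / exp r >= - L / 2).
      { apply Rle_ge. apply Rmult_le_reg_r with (exp r); auto.
        replace (g * S1 / exp r * exp r) with (g * S1) by (field; lra). nra. }
      lra. }
    nra. }
  assert (Fcont : continuity F).
  { intros x. apply continuity_pt_filterlim.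
    apply (ex_derive_continuous (K:=R_AbsRing) (V:=R_NormedModule) F).
    unfold F, Bv. fold g. auto_derive. pose proof (exp_pos x). apply Rmult_integral_contrapositive_currified; [lra| apply Rinv_neq_0_compat; lra]. }
  exists (Rmax 1 (F R0)). split.
  { eapply Rlt_le_trans; [|apply Rmax_l]; lra. }
  intros mu Hmu.
  set (R1 := Rmax R0 (mu / (g * L))).
  assert (HR01 : R0 <= R1) by apply Rmax_l.
  assert (HF1 : mu <= F R1).
  { eapply Rle_trans; [|apply Fbound; auto].
    pose proof (exp_ineq1_le (2 * g * R1)).
    assert (HR1 : mu / (g * L) <= R1) by apply Rmax_r.
    assert (Hm : mu <= g * L * R1).
    { apply Rmult_le_compat_l with (r := g * L) in HR1; [|nra].
      replace (g * L * (mu / (g * L))) with mu in HR1 by (field; lra). lra. }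
    nra. }
  assert (HF0 : F R0 <= mu) by (eapply Rle_trans; [apply Rmax_r| exact Hmu]).
  destruct (IVT_gen F R0 R1 mu Fcont) as [x [Hx Fx]].
  { split; [eapply Rle_trans; [apply Rmin_l|]; lra | eapply Rle_trans; [|apply Rmax_r]; lra]. }
  rewrite Rmin_left in Hx by lra.
  exists (exp x * exp x), (ubf p x), (uhf G p x). split; [|split].
  - apply possol; auto.
  - rewrite (mass_val G p x l1); auto.
  - unfold energy. rewrite (kin_val G p x l2), (lp_val G p x l3); auto.
    fold g L S2 S3.
    pose proof (exp_pos x) as HX. pose proof (exp_pos (2 * g * x)) as HE.
    replace (exp (p * g * x)) with (exp (2 * g * x) * (exp x * exp x)).
    2:{ rewrite <- !exp_plus. f_equal. unfold g, gam. field. lra. }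
    unfold Bv. fold g.
    set (X := exp x) in *. set (E := exp (2 * g * x)) in *.
    replace (/ 2 * (E * (X * X) / (X / g) * S2) - / p * (E * (X * X) * L + E * (X * X) / (X / g) * S3))
      with (E * X * ((g * S2 / 2 - g * S3 / p) - X * L / p)) by (field; repeat split; lra).
    assert (HXQ : Q < X).
    { specialize (Hbig x (proj1 Hx)). pose proof (Rle_abs Q).
      assert (0 <= 2 * Rabs (g * S1) / L) by (apply Rmult_le_pos; [pose proof (Rabs_pos (g * S1)); lra| left; apply Rinv_0_lt_compat; auto]).
      fold X in Hbig. lra. }
    assert (Hneg : (g * S2 / 2 - g * S3 / p) - X * L / p < 0).
    { unfold Q in HXQ.
      apply Rmult_lt_compat_r with (r := L / p) in HXQ; [|apply Rdiv_lt_0_compat; lra].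
      replace (p * (g * S2 / 2 - g * S3 / p) / L * (L / p)) with (g * S2 / 2 - g * S3 / p) in HXQ by (field; lra).
      replace (X * (L / p)) with (X * L / p) in HXQ by (field; lra). lra. }
    assert (0 < E * X) by nra. nra.
Qed.
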